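(* Let $\mathbb{F}$ be a field of characteristic not $2$, $\alpha\in\mathbb{F}\setminus\{0,1\}$, and suppose $\mathbb{F}$ contains a root $\zeta$ of $x^2-(4\alpha-2)x+1$. In $\mathfrak{J}(\alpha)$ let $\mu=-\frac{1+\zeta}{4}$, $\nu=-\frac{1+\zeta^{-1}}{4}$, $\mathfrak{s}=\frac{1}{4(\alpha-1)}(\mu\mathfrak{a}+\mathfrak{a}\mathfrak{b}+\nu\mathfrak{b})$, $\mathfrak{t}=\frac{1}{\alpha(\alpha-1)}(\nu\mathfrak{a}+\mathfrak{a}\mathfrak{b}+\mu\mathfrak{b})$, $1_{\mathfrak{J}}=\frac{2}{\alpha-1}\sigma$, and $\rho=\tau_{\mathfrak{a}}\tau_{\mathfrak{b}}$. Then $\rho$ acts on $\mathbb{F}\mathfrak{s}$ as the scalar $\zeta^{-2}$, on $\mathbb{F}\mathfrak{t}$ as the scalar $\zeta^2$, and on $\mathbb{F}1_{\mathfrak{J}}$ as the identity.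
   Context: $\mathfrak{J}(\alpha)$ is the commutative algebra with basis $\mathfrak{a},\mathfrak{b},\sigma$ and product $\mathfrak{a}^2=\mathfrak{a}$, $\mathfrak{b}^2=\mathfrak{b}$, $\mathfrak{a}\mathfrak{b}=\frac12\mathfrak{a}+\frac12\mathfrak{b}+\sigma$, $\mathfrak{a}\sigma=\frac{\alpha-1}{2}\mathfrak{a}$, $\mathfrak{b}\sigma=\frac{\alpha-1}{2}\mathfrak{b}$, $\sigma^2=\frac{\alpha-1}{2}\sigma$; $1_{\mathfrak{J}}$ is its identity and $\mathfrak{a},\mathfrak{b}$ are primitive axes of Jordan type half in it. For an axis $x$ with eigenspaces $J_\lambda(x)=\{u:xu=\lambda u\}$, $\lambda\in\{1,0,\frac12\}$, the Miyamoto involution $\tau_x$ is the automorphism acting as identity on $J_1(x)\oplus J_0(x)$ and as $-1$ on $J_{1/2}(x)$. *)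

(* Defs.v *)
(* The algebra J(alpha) is modelled on 'rV[F]_3, with
   coordinates w.r.t. the basis (a, b, sigma). *)
From HB Require Import structures.
From mathcomp Require Import all_boot all_order all_algebra.
Set Implicit Arguments. Unset Strict Implicit. Unset Printing Implicit Defensive.
Import Order.TTheory GRing.Theory.
Local Open Scope ring_scope.

Section J.
Variable F : fieldType.

Definition mkJ (x y z : F) : 'rV[F]_3 := \row_(i < 3) [:: x; y; z]`_i.

Definition Ja : 'rV[F]_3 := mkJ 1 0 0.
Definition Jb : 'rV[F]_3 := mkJ 0 1 0.
Definition Jsigma : 'rV[F]_3 := mkJ 0 0 1.

(* The product of J(alpha), obtained by bilinear extension of
   a^2 = a, b^2 = b, ab = a/2 + b/2 + sigma, a sigma = (alpha-1)/2 a,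
   b sigma = (alpha-1)/2 b, sigma^2 = (alpha-1)/2 sigma. *)
Definition Jmul (alpha : F) (u v : 'rV[F]_3) : 'rV[F]_3 :=
  let c := (alpha - 1) / 2 in
  let u0 := u 0 0 in let u1 := u 0 1 in let u2 := u 0 2 in
  let v0 := v 0 0 in let v1 := v 0 1 in let v2 := v 0 2 in
  mkJ (u0 * v0 + (u0 * v1 + u1 * v0) / 2 + c * (u0 * v2 + u2 * v0))
      (u1 * v1 + (u0 * v1 + u1 * v0) / 2 + c * (u1 * v2 + u2 * v1))
      ((u0 * v1 + u1 * v0) + c * (u2 * v2)).

Definition in_eigenspace (alpha : F) (x : 'rV[F]_3) (lam : F) (u : 'rV[F]_3) :=
  Jmul alpha x u = lam *: u.

(* Since x is a primitive
   axis, J = J_1(x) + J_0(x) + J_{1/2}(x), so this determines tau uniquely. *)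
Definition is_miyamoto (alpha : F) (x : 'rV[F]_3)
    (tau : {linear 'rV[F]_3 -> 'rV[F]_3}) : Prop :=
  (forall u, in_eigenspace alpha x 1 u -> tau u = u) /\
  (forall u, in_eigenspace alpha x 0 u -> tau u = u) /\
  (forall u, in_eigenspace alpha x (2^-1) u -> tau u = - u).

End J.

(* Main.v *)
Require Import Defs.
From HB Require Import structures.
From mathcomp Require Import all_boot all_order all_algebra.
From mathcomp Require Import ring.
Import GRing.Theory.
Local Open Scope ring_scope.

Section H.
Variable F : fieldType.

Lemma mkJ0 (x y z : F) : (mkJ x y z) 0 0 = x. Proof. by rewrite mxE. Qed.
Lemma mkJ1 (x y z : F) : (mkJ x y z) 0 1 = y. Proof. by rewrite mxE. Qed.
Lemma mkJ2 (x y z : F) : (mkJ x y z) 0 2%:R = z. Proof. by rewrite mxE. Qed.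

Lemma mkJ_eq (x y z x' y' z' : F) : x = x' -> y = y' -> z = z' ->
  mkJ x y z = mkJ x' y' z'.
Proof. by move=> -> -> ->. Qed.

Lemma scale_mkJ (k x y z : F) : k *: mkJ x y z = mkJ (k*x) (k*y) (k*z).
Proof. by apply/rowP => i; rewrite !mxE; case: i => [[|[|[|]]]]. Qed.

Lemma add_mkJ (x y z x' y' z' : F) :
  mkJ x y z + mkJ x' y' z' = mkJ (x+x') (y+y') (z+z').
Proof. by apply/rowP => i; rewrite !mxE; case: i => [[|[|[|]]]]. Qed.

Lemma opp_mkJ (x y z : F) : - mkJ x y z = mkJ (-x) (-y) (-z).
Proof. by apply/rowP => i; rewrite !mxE; case: i => [[|[|[|]]]]. Qed.

Lemma Jmul_mkJ alpha (x y z x' y' z' : F) :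
  Jmul alpha (mkJ x y z) (mkJ x' y' z') =
  let c := (alpha - 1) / 2 in
  mkJ (x * x' + (x * y' + y * x') / 2 + c * (x * z' + z * x'))
      (y * y' + (x * y' + y * x') / 2 + c * (y * z' + z * y'))
      ((x * y' + y * x') + c * (z * z')).
Proof. by rewrite /Jmul !mkJ0 !mkJ1 !mkJ2. Qed.

Lemma mkJ_dec (x y z : F) : mkJ x y z = x *: Ja F + y *: Jb F + z *: Jsigma F.
Proof.
rewrite /Ja /Jb /Jsigma !scale_mkJ !add_mkJ; apply: mkJ_eq; ring.
Qed.

Lemma lin_mkJ (f : {linear 'rV[F]_3 -> 'rV[F]_3}) (x y z : F) :
  f (mkJ x y z) = x *: f (Ja F) + y *: f (Jb F) + z *: f (Jsigma F).
Proof. by rewrite mkJ_dec !linearD !linearZ. Qed.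

End H.

Theorem corollary3p10 (F : fieldType) (alpha zeta : F)
  (tau_a tau_b : {linear 'rV[F]_3 -> 'rV[F]_3}) :
  (2 : F) != 0 ->
  alpha != 0 -> alpha != 1 ->
  zeta ^+ 2 - (4 * alpha - 2) * zeta + 1 = 0 ->
  is_miyamoto alpha (Ja F) tau_a ->
  is_miyamoto alpha (Jb F) tau_b ->
  let mu := - (1 + zeta) / 4 in
  let nu := - (1 + zeta^-1) / 4 in
  let ab := Jmul alpha (Ja F) (Jb F) in
  let s := (4 * (alpha - 1))^-1 *: (mu *: Ja F + ab + nu *: Jb F) in
  let t := (alpha * (alpha - 1))^-1 *: (nu *: Ja F + ab + mu *: Jb F) in
  let one := (2 / (alpha - 1)) *: Jsigma F in
  let rho := fun u => tau_b (tau_a u) in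
  (forall k : F, rho (k *: s) = zeta ^- 2 *: (k *: s)) /\
  (forall k : F, rho (k *: t) = zeta ^+ 2 *: (k *: t)) /\
  (forall k : F, rho (k *: one) = k *: one).
Proof.
move=> h2 ha0 ha1 hz [A1 [A0 Ah]] [B1 [B0 Bh]] mu nu ab s t one rho.
have a1 : alpha - 1 != 0 by rewrite subr_eq0.
have h4 : (4:F) != 0.
  have -> : (4:F) = 2 * 2 by ring.
  by rewrite mulf_neq0.
pose c := (alpha - 1) / 2.
pose d := 2 * alpha - 1.
have TaA : tau_a (Ja F) = Ja F.
  apply: A1; rewrite /in_eigenspace /Ja Jmul_mkJ scale_mkJ /=.
  apply: mkJ_eq; field; done.
have TaS : tau_a (Jsigma F) = Jsigma F.
  have E := A0 (mkJ (- c) 0 1).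
  rewrite lin_mkJ TaA scale0r addr0 scale1r in E.
  apply/(addrI (- c *: Ja F)); rewrite E.
    rewrite /Ja /Jsigma scale_mkJ add_mkJ; apply: mkJ_eq; ring.
  rewrite /in_eigenspace /Ja Jmul_mkJ scale_mkJ /=.
  apply: mkJ_eq; rewrite /c; field; done.
have TaB : tau_a (Jb F) = mkJ (2 * d) (-1) (-4).
  have E := Ah (mkJ (- d) 1 2).
  rewrite lin_mkJ TaA TaS scale1r in E.
  apply/(addIr (2 *: Jsigma F)); apply/(addrI (- d *: Ja F)).
  rewrite addrA E.
    rewrite /Ja /Jsigma !scale_mkJ !add_mkJ opp_mkJ; apply: mkJ_eq; ring.
  rewrite /in_eigenspace /Ja Jmul_mkJ scale_mkJ /=.
  apply: mkJ_eq; rewrite /d; field; done.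
have Ta : forall x y z, tau_a (mkJ x y z) = mkJ (x + 2 * d * y) (- y) (z - 4 * y).
  move=> x y z; rewrite lin_mkJ TaA TaB TaS /Ja /Jsigma !scale_mkJ !add_mkJ.
  apply: mkJ_eq; ring.
have TbB : tau_b (Jb F) = Jb F.
  apply: B1; rewrite /in_eigenspace /Jb Jmul_mkJ scale_mkJ /=.
  apply: mkJ_eq; field; done.
have TbS : tau_b (Jsigma F) = Jsigma F.
  have E := B0 (mkJ 0 (- c) 1).
  rewrite lin_mkJ TbB scale0r add0r scale1r in E.
  apply/(addrI (- c *: Jb F)); rewrite E.
    rewrite /Jb /Jsigma scale_mkJ add_mkJ; apply: mkJ_eq; ring.
  rewrite /in_eigenspace /Jb Jmul_mkJ scale_mkJ /=.
  apply: mkJ_eq; rewrite /c; field; done.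
have TbA : tau_b (Ja F) = mkJ (-1) (2 * d) (-4).
  have E := Bh (mkJ 1 (- d) 2).
  rewrite lin_mkJ TbB TbS scale1r in E.
  apply/(addIr (2 *: Jsigma F)); apply/(addIr (- d *: Jb F)).
  rewrite -addrA (addrC (2 *: Jsigma F)) addrA E.
    rewrite /Jb /Jsigma !scale_mkJ !add_mkJ opp_mkJ; apply: mkJ_eq; ring.
  rewrite /in_eigenspace /Jb Jmul_mkJ scale_mkJ /=.
  apply: mkJ_eq; rewrite /d; field; done.
have Tb : forall x y z, tau_b (mkJ x y z) = mkJ (- x) (y + 2 * d * x) (z - 4 * x).
  move=> x y z; rewrite lin_mkJ TbA TbB TbS /Jb /Jsigma !scale_mkJ !add_mkJ.
  apply: mkJ_eq; ring.
have z0 : zeta != 0.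
  apply/eqP => e; move: hz; rewrite e => /eqP; rewrite expr2 !mul0r !mulr0.
  by rewrite sub0r oppr0 add0r oner_eq0.
have Ha : alpha = (zeta + 1) ^+ 2 / (4 * zeta).
  apply/(mulIf (mulf_neq0 h4 z0)); rewrite mulfVK ?mulf_neq0 //.
  apply/eqP; rewrite -subr_eq0; apply/eqP.
  have -> : alpha * (4 * zeta) - (zeta + 1) ^+ 2
            = - (zeta ^+ 2 - (4 * alpha - 2) * zeta + 1) by ring.
  by rewrite hz oppr0.
have zp1 : zeta + 1 != 0.
  apply: contra ha0 => /eqP e; by rewrite Ha e expr2 !mul0r.
have zm1 : zeta - 1 != 0.
  apply: contra ha1 => /eqP e; move: e => /eqP; rewrite subr_eq0 => /eqP e.
  rewrite Ha e; apply/eqP; field; done.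
have q : (zeta + 1) ^+ 2 + -1 * (4 * zeta) != 0.
  have -> : (zeta + 1) ^+ 2 + -1 * (4 * zeta) = (zeta - 1) ^+ 2 by ring.
  by rewrite expf_neq0.
rewrite /rho /s /t /one /ab /mu /nu /d /Ja /Jb /Jsigma Jmul_mkJ /=.
rewrite !scale_mkJ !add_mkJ !scale_mkJ.
split; [|split] => k; rewrite !scale_mkJ Ta Tb; apply: mkJ_eq; rewrite /d Ha;
  field; rewrite ?z0 ?zp1 ?zm1 ?h2 ?h4 ?q //.
Qed.
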